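(* Let $T$ be a well-formed trace and let $e,f$ be two conflicting write events of $T$. If there exists a correctly reordered prefix of $T$ in which $e$ appears immediately before $f$, then there also exists a correctly reordered prefix of $T$ in which $f$ appears immediately before $e$.
   Context: Traces. A trace $T$ is a finite sequence of pairwise distinct events. Each event $e$ belongs to a thread $\mathrm{tid}(e)$ and is one of: a read $r(x)$ or write $w(x)$ of a shared variable $x$, or an acquire $acq(y)$ or release $rel(y)$ of a lock $y$. The projection of $T$ onto thread $i$ is the subsequence of events of thread $i$. $T$ is well-formed if a thread only acquires a lock not currently held and every release $rel(y)$ in thread $i$ has a matching earlier acquire $acq(y)$ in thread $i$ with no other acquire on $y$ in between. Two events are conflicting if they are reads/writes on the same variable, at least one is a write, and they belong to different threads. For a read $e$ on $x$, a write $f$ on $x$ is the last write of $e$ w.r.t. $T$ if $f$ precedes $e$ in $T$ and no other write on $x$ lies strictly between them. Correct reordering. $T'$ is a correctly reordered prefix of $T$ if $T'$ is a sequence of some of the events of $T$ such that: (i) for every thread $i$, the projection of $T'$ onto $i$ is a prefix of the projection of $T$ onto $i$; (ii) for every read $e$ in $T'$ whose last write w.r.t. $T$ is $f$, $f$ is in $T'$ and is also the last write of $e$ w.r.t. $T'$; (iii) for any two acquires $e_1,e_2$ on the same lock with $e_1$ before $e_2$ in $T'$, the matching release of $e_1$ is in $T'$ and lies strictly between $e_1$ and $e_2$. *)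

(* Defs.v *)
From HB Require Import structures.
From mathcomp Require Import all_boot.
Set Implicit Arguments. Unset Strict Implicit. Unset Printing Implicit Defensive.

Inductive op : Type :=
| Read of nat | Write of nat | Acq of nat | Rel of nat.

Definition op_eq_dec : forall a b : op, {a = b} + {a <> b}.
Proof. decide equality; apply: eq_comparable. Defined.
HB.instance Definition _ := hasDecEq.Build op (compareP op_eq_dec).

(* An event: a unique identifier (so that several events with the same thread
   and operation can be distinct), its thread, and its operation. *)
Record event : Type := Event { eid : nat; tid : nat; eop : op }.

Definition event_eq_dec : forall a b : event, {a = b} + {a <> b}.
Proof. decide equality; try apply: eq_comparable; apply op_eq_dec. Defined.
HB.instance Definition _ := hasDecEq.Build event (compareP event_eq_dec).

Definition trace := seq event.

Definition is_read (e : event) x := eop e == Read x.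
Definition is_write (e : event) x := eop e == Write x.
Definition is_acq (e : event) y := eop e == Acq y.
Definition is_rel (e : event) y := eop e == Rel y.
Definition is_access (e : event) x := is_read e x || is_write e x.

Definition before (s : trace) (e f : event) :=
  [&& e \in s, f \in s & index e s < index f s].

Definition proj (s : trace) (i : nat) : trace := [seq e <- s | tid e == i].

Definition held (P : trace) (y : nat) : Prop :=
  exists j, j < size P /\ is_acq (nth (Event 0 0 (Read 0)) P j) y /\
    forall m, j < m < size P -> ~~ is_rel (nth (Event 0 0 (Read 0)) P m) y.

Definition well_formed (T : trace) : Prop :=
  let ev k := nth (Event 0 0 (Read 0)) T k in
  [/\ uniq T,
      (forall k y, k < size T -> is_acq (ev k) y -> ~ held (take k T) y) &
      (forall k y, k < size T -> is_rel (ev k) y ->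
         exists j, [/\ j < k, is_acq (ev j) y, tid (ev j) = tid (ev k) &
                    forall m, j < m < k -> ~~ is_acq (ev m) y])].

Definition conflicting (e f : event) : Prop :=
  exists x, [/\ is_access e x, is_access f x, is_write e x || is_write f x
              & tid e != tid f].

Definition last_write (s : trace) (e f : event) : Prop :=
  exists x, [/\ is_read e x, is_write f x, before s f e &
    forall g, before s f g -> before s g e -> ~~ is_write g x].

Definition matching_release (T : trace) (a r : event) : Prop :=
  exists y, [/\ is_acq a y, is_rel r y, tid r = tid a, before T a r &
    forall g, before T a g -> before T g r -> tid g = tid a -> ~~ is_rel g y].

Definition correctly_reordered_prefix (T T' : trace) : Prop :=
  [/\ uniq T', {subset T' <= T},
      (forall i, prefix (proj T' i) (proj T i)),
      (forall e f, e \in T' -> last_write T e f -> f \in T' /\ last_write T' e f) &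
      (forall e1 e2 y, is_acq e1 y -> is_acq e2 y -> before T' e1 e2 ->
         exists r, [/\ matching_release T e1 r, r \in T',
                       before T' e1 r & before T' r e2])].

Definition imm_before (s : trace) (e f : event) := infix [:: e; f] s.

(* Main.v *)
Require Import Defs.
From mathcomp Require Import all_boot.

Lemma before_cat (P S : trace) g h :
  g \in P -> before (P ++ S) h g = before P h g.
Proof.
move=> gP; rewrite /before !mem_cat gP !index_cat gP /=.
case hP: (h \in P) => //=.
have := index_mem g P; rewrite gP => Hg.
by apply/negbTE/negP => /andP [_ H]; move: (leq_trans H (ltnW Hg)); rewrite ltnNge leq_addr.
Qed.

Lemma beforeP_mem (P : trace) h g : before P h g -> h \in P.
Proof. by case/and3P. Qed.

Lemma pre_lem (a b : trace) z : prefix (a ++ [:: z]) (a ++ z :: b).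
Proof. rewrite (_ : z :: b = [:: z] ++ b) // catA; exact: prefix_prefix. Qed.

Theorem mainTheorem9 (T : trace) (e f : event) (x : nat) :
  well_formed T -> e \in T -> f \in T ->
  is_write e x -> is_write f x -> conflicting e f ->
  (exists T', correctly_reordered_prefix T T' /\ imm_before T' e f) ->
  exists T', correctly_reordered_prefix T T' /\ imm_before T' f e.
Proof.
move=> _ _ _ we wf [x0 [_ _ _ tef]] [T' [[u sub pre lw lk] /infixP [P [Q defT']]]].
have mP : forall g, g \in P ++ [:: f; e] -> eop g <> Write x -> g \in P.
  move=> g; rewrite mem_cat !inE => /orP [//|/orP [/eqP->|/eqP->]].
  - by move/eqP: wf.
  - by move/eqP: we.
have sP : T' = P ++ (e :: f :: Q) by rewrite defT'.
exists (P ++ [:: f; e]); split; last first.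
  by apply/infixP; exists P, [::]; rewrite cats0.
split.
- move: u; rewrite defT' !cat_uniq /= !inE !negb_or.
  case/and5P => -> /and3P [a b _] /andP [c _] _ _.
  by rewrite a b eq_sym c.
- move=> g; rewrite mem_cat !inE => H; apply: sub; rewrite defT' !mem_cat !inE.
  by case/orP: H => [->|/orP [->|->]]; rewrite ?orbT.
- move=> i; have := pre i; rewrite defT' /proj !filter_cat /=.
  case Ei: (tid e == i); case Fi: (tid f == i) => /= H.
  + by move: tef; rewrite (eqP Ei) (eqP Fi) eqxx.
  + apply: prefix_trans H; exact: pre_lem.
  + apply: prefix_trans H; exact: pre_lem.
  + apply: prefix_trans H; rewrite cats0; exact: prefix_prefix.
- move=> g h gT [x1 [rg wh bhg nw]].
  have gP : g \in P by apply: (mP g gT) => E; move: rg; rewrite /is_read E.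
  have gT' : g \in T' by rewrite sP mem_cat gP.
  have [hT' [x2 [rg2 wh2 b2 nw2]]] := lw g h gT' (ex_intro _ x1 (And4 rg wh bhg nw)).
  move: b2; rewrite sP before_cat // => b2.
  have hP := beforeP_mem _ _ _ b2.
  split; first by rewrite mem_cat hP.
  exists x2; split => //; first by rewrite before_cat.
  move=> k bhk bkg; move: bkg; rewrite before_cat // => bkg.
  have kP := beforeP_mem _ _ _ bkg.
  apply: nw2; first by rewrite sP before_cat //; move: bhk; rewrite before_cat.
  by rewrite sP before_cat.
- move=> e1 e2 y a1 a2 b12.
  have e2T : e2 \in P ++ [:: f; e] by case/and3P: b12.
  have e2P : e2 \in P by apply: (mP e2 e2T) => E; move: a2; rewrite /is_acq E.
  move: b12; rewrite before_cat // => b12.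
  have b12' : before T' e1 e2 by rewrite sP before_cat.
  have [r [mr rT' b1r br2]] := lk e1 e2 y a1 a2 b12'.
  move: br2; rewrite sP before_cat // => br2.
  have rP := beforeP_mem _ _ _ br2.
  exists r; split => //; first by rewrite mem_cat rP.
  - by move: b1r; rewrite sP !before_cat.
  - by rewrite before_cat.
Qed.
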